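(* Let $n\ge 3$. An $n$-element subset $V\subseteq\mathbb R$ is optimal for $3$-term arithmetic progressions if and only if there is a similarity $f$ of $\mathbb R$ such that $f(V)=E\cup O$, where $E$ is a nonempty set of consecutive even integers, $O$ is a nonempty set of consecutive odd integers, and $E$ and $O$ are concentric if $n$ is odd, and nearly concentric if $n$ is even.
   Context: A $k$-term arithmetic progression is a set $\{a,a+d,\dots,a+(k-1)d\}\subseteq\mathbb R$ with $d>0$; $S_{\mathcal A_k}(V)$ denotes the number of $k$-term arithmetic progressions contained in $V$. An $n$-set $V\subseteq\mathbb R$ is optimal for $k$-term arithmetic progressions if $S_{\mathcal A_k}(V)$ equals the maximum of $S_{\mathcal A_k}(W)$ over all $n$-subsets $W\subseteq\mathbb R$, which equals $(n-r)(n+r-k+1)/(2k-2)$ with $r$ the remainder of $n$ modulo $k-1$. A similarity of $\mathbb R$ is a map $x\mapsto ax+b$ with $a\neq0$. A set of consecutive even (resp. odd) integers is a set $\{c,c+2,c+4,\dots,c+2m\}$ with $c$ even (resp. odd) and $m\ge0$. The barycenter of a finite arithmetic progression is the arithmetic mean of its elements; $E$ and $O$ are concentric if their barycenters are equal, and nearly concentric if their barycenters differ by exactly $1$. *)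

(* Defs.v *)
(* classical reals. Finite subsets of R are represented as
   duplicate-free lists. *)
From Stdlib Require Import Reals Lra ZArith List Bool.
Import ListNotations.
Open Scope R_scope.
Open Scope bool_scope.

Definition inR (x : R) (l : list R) : bool :=
  if in_dec Req_EM_T x l then true else false.

(* S_{A_3}(V): number of 3-term APs {a, a+d, a+2d} (d > 0) contained in V.
   Such a progression is determined by the pair (a, a+d) of its two smallest
   elements, so we count pairs (a, b) in V x V with d := b - a > 0 and
   a + 2d in V. *)
Definition S3 (V : list R) : nat :=
  length (filter (fun p : R * R =>
            let a := fst p in let d := snd p - fst p in
            (if Rlt_dec 0 d then true else false) && inR (a + 2 * d) V)
          (list_prod V V)).

Definition optimal3 (V : list R) : Prop :=
  forall W : list R, NoDup W -> length W = length V -> (S3 W <= S3 V)%nat.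

Definition similarity (f : R -> R) : Prop :=
  exists a b : R, a <> 0 /\ forall x, f x = a * x + b.

Definition consec_from (c : Z) (m : nat) : list R :=
  map (fun j => IZR (c + 2 * Z.of_nat j)) (seq 0 (S m)).

Definition consec_even (E : list R) : Prop :=
  exists (c : Z) (m : nat), Z.Even c /\ E = consec_from c m.

Definition consec_odd (O : list R) : Prop :=
  exists (c : Z) (m : nat), Z.Odd c /\ O = consec_from c m.

Definition barycenter (l : list R) : R :=
  fold_right Rplus 0 l / INR (length l).

Definition concentric (E O : list R) : Prop := barycenter E = barycenter O.
Definition nearly_concentric (E O : list R) : Prop :=
  Rabs (barycenter E - barycenter O) = 1.

(* Main.v *)
Require Import Defs.
From Stdlib Require Import Reals ZArith List.
From Stdlib Require Import Lra Lia Permutation Sorting.Sorted.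
Import ListNotations.
Open Scope R_scope.


Definition ltb (x y : R) : bool := if Rlt_dec x y then true else false.
Lemma ltb_true x y : ltb x y = true <-> x < y.
Proof. unfold ltb; destruct Rlt_dec; split; intros; try congruence; lra. Qed.
Lemma inR_true x l : inR x l = true <-> In x l.
Proof. unfold inR; destruct in_dec; split; intros; try congruence; tauto. Qed.

Fixpoint sumf (f : R -> nat) (l : list R) : nat :=
  match l with nil => 0%nat | x :: l' => (f x + sumf f l')%nat end.

Lemma sumf_ext_in f g l : (forall x, In x l -> f x = g x) -> sumf f l = sumf g l.
Proof. induction l; simpl; intros; auto. Qed.
Lemma sumf_plus f g l : sumf (fun x => f x + g x)%nat l = (sumf f l + sumf g l)%nat.
Proof. induction l; simpl; lia. Qed.
Lemma sumf_perm f l l' : Permutation l l' -> sumf f l = sumf f l'.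
Proof. induction 1; simpl; lia. Qed.
Lemma sumf_le_eq f g l : (forall x, In x l -> (f x <= g x)%nat) -> sumf f l = sumf g l ->
  forall x, In x l -> f x = g x.
Proof.
  induction l; simpl; intros H E x Hx; [contradiction|].
  assert (f a <= g a)%nat by auto.
  assert (sumf f l <= sumf g l)%nat.
  { clear -H. induction l; simpl in *; auto. assert (f a0 <= g a0)%nat by auto.
    assert (sumf f l <= sumf g l)%nat. apply IHl. intros; apply H; tauto. lia. }
  destruct Hx; [subst; lia|]. apply IHl; auto. lia.
Qed.

Definition cnt V b := length (filter (fun a => ltb a b && inR (2*b - a) V) V).
Definition cnt' V b := length (filter (fun a => ltb b a && inR (2*b - a) V) V).
Definition lo V b := length (filter (fun a => ltb a b) V).
Definition hi V b := length (filter (fun a => ltb b a) V).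

Lemma len_filter_prod (P : R * R -> bool) l1 l2 :
  length (filter P (list_prod l1 l2)) = sumf (fun y => length (filter (fun x => P (x, y)) l1)) l2.
Proof.
  induction l1; simpl.
  - induction l2; simpl; auto.
  - rewrite filter_app, length_app, IHl1.
    transitivity (sumf (fun y => if P (a, y) then 1 else 0)%nat l2 +
                  sumf (fun y => length (filter (fun x => P (x, y)) l1)) l2)%nat.
    + f_equal. clear. induction l2; simpl; auto. destruct (P (a, a0)); simpl; lia.
    + rewrite <- sumf_plus. apply sumf_ext_in. intros y _. destruct (P (a, y)); simpl; lia.
Qed.

Lemma S3_cnt V : S3 V = sumf (cnt V) V.
Proof.
  unfold S3. rewrite len_filter_prod. apply sumf_ext_in. intros b _.
  unfold cnt. f_equal. apply filter_ext. intros a. simpl.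
  replace (a + 2 * (b - a)) with (2*b - a) by ring.
  f_equal. unfold ltb. destruct (Rlt_dec 0 (b - a)), (Rlt_dec a b); auto; lra.
Qed.

Lemma filter_le (f g : R -> bool) l : (forall x, In x l -> f x = true -> g x = true) ->
  (length (filter f l) <= length (filter g l))%nat.
Proof.
  induction l; simpl; intros; auto.
  destruct (f a) eqn:Ef.
  - rewrite (H a); auto. simpl. apply le_n_S. auto.
  - destruct (g a); simpl; auto.
Qed.

Lemma filter_eq_all (p q : R -> bool) l :
  length (filter (fun x => p x && q x) l) = length (filter p l) ->
  forall x, In x l -> p x = true -> q x = true.
Proof.
  induction l; simpl; intros E x Hx Hp; [contradiction|].
  assert (Hle : forall l0, (length (filter (fun x => p x && q x) l0) <= length (filter p l0))%nat).
  { intros; apply filter_le. intros y _ H. apply andb_prop in H; tauto. }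
  destruct Hx as [<-|Hx].
  - rewrite Hp in E. destruct (q a); auto. simpl in E. specialize (Hle l). lia.
  - destruct (p a) eqn:Ea; destruct (q a) eqn:Eb; simpl in E.
    + apply IHl; auto.
    + specialize (Hle l). lia.
    + apply IHl; auto.
    + apply IHl; auto.
Qed.

Lemma NoDup_map_inj (h : R -> R) l : (forall x y, h x = h y -> x = y) -> NoDup l -> NoDup (map h l).
Proof.
  intros Hi. induction 1; simpl; constructor; auto.
  intro Hin. apply in_map_iff in Hin. destruct Hin as [y [Hy Hy']].
  apply Hi in Hy. subst; auto.
Qed.

Lemma cnt_le_cnt' V b : NoDup V -> (cnt V b <= cnt' V b)%nat.
Proof.
  intros ND. unfold cnt, cnt'.
  rewrite <- (length_map (fun a => 2*b - a)).
  apply NoDup_incl_length.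
  - apply NoDup_map_inj. intros; lra. apply NoDup_filter; auto.
  - intros y Hy. apply in_map_iff in Hy. destruct Hy as [a [<- Ha]].
    apply filter_In in Ha. destruct Ha as [Ha Hb]. apply andb_prop in Hb. destruct Hb as [H1 H2].
    apply ltb_true in H1. apply inR_true in H2.
    apply filter_In. split; auto. apply andb_true_intro. split.
    apply ltb_true; lra. apply inR_true. replace (2*b - (2*b - a)) with a by ring; auto.
Qed.

Lemma cnt'_le_cnt V b : NoDup V -> (cnt' V b <= cnt V b)%nat.
Proof.
  intros ND. unfold cnt, cnt'.
  rewrite <- (length_map (fun a => 2*b - a)).
  apply NoDup_incl_length.
  - apply NoDup_map_inj. intros; lra. apply NoDup_filter; auto.
  - intros y Hy. apply in_map_iff in Hy. destruct Hy as [a [<- Ha]].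
    apply filter_In in Ha. destruct Ha as [Ha Hb]. apply andb_prop in Hb. destruct Hb as [H1 H2].
    apply ltb_true in H1. apply inR_true in H2.
    apply filter_In. split; auto. apply andb_true_intro. split.
    apply ltb_true; lra. apply inR_true. replace (2*b - (2*b - a)) with a by ring; auto.
Qed.

Lemma cnt_le_lo V b : (cnt V b <= lo V b)%nat.
Proof. apply filter_le. intros x _ H. apply andb_prop in H; tauto. Qed.
Lemma cnt'_le_hi V b : (cnt' V b <= hi V b)%nat.
Proof. apply filter_le. intros x _ H. apply andb_prop in H; tauto. Qed.

Lemma ltb_false x y : ltb x y = false <-> ~ x < y.
Proof. unfold ltb; destruct Rlt_dec; split; intros; try congruence; lra. Qed.

Lemma ltb_t x y : x < y -> ltb x y = true.
Proof. apply ltb_true. Qed.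
Lemma ltb_f x y : ~ x < y -> ltb x y = false.
Proof. apply ltb_false. Qed.

Lemma lohi_notin l b : ~ In b l -> (lo l b + hi l b)%nat = length l.
Proof.
  unfold lo, hi. induction l as [|a l IHl]; simpl; intros H; auto.
  destruct (Rlt_dec a b) as [E1|E1]; [rewrite (ltb_t _ _ E1)|rewrite (ltb_f _ _ E1)];
  (destruct (Rlt_dec b a) as [E2|E2]; [rewrite (ltb_t _ _ E2)|rewrite (ltb_f _ _ E2)]); simpl.
  - lra.
  - f_equal; apply IHl; tauto.
  - rewrite Nat.add_succ_r; f_equal; apply IHl; tauto.
  - exfalso; apply H; left; lra.
Qed.

Lemma lohi_in l b : NoDup l -> In b l -> (lo l b + hi l b)%nat = pred (length l).
Proof.
  unfold lo, hi. induction 1 as [|x l Hx ND IH]; simpl; intros Hb; [contradiction|].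
  destruct Hb as [<-|Hb].
  - rewrite (ltb_f x x) by lra. apply lohi_notin; auto.
  - assert (x <> b) by (intro; subst; auto).
    destruct l as [|y l]; [contradiction|].
    destruct (Rlt_dec x b) as [E1|E1]; [rewrite (ltb_t _ _ E1)|rewrite (ltb_f _ _ E1)];
    (destruct (Rlt_dec b x) as [E2|E2]; [rewrite (ltb_t _ _ E2)|rewrite (ltb_f _ _ E2)]); simpl.
    + lra.
    + simpl in IH. rewrite IH; auto.
    + rewrite Nat.add_succ_r. simpl in IH. rewrite IH; auto.
    + exfalso; apply H; lra.
Qed.


Fixpoint ins (x : R) (s : list R) : list R :=
  match s with nil => [x] | y :: s' => if Rlt_dec x y then x :: y :: s' else y :: ins x s' end.

Lemma ins_perm x s : Permutation (x :: s) (ins x s).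
Proof.
  induction s as [|y s IH]; simpl; auto.
  destruct (Rlt_dec x y); auto.
  eapply perm_trans. apply perm_swap. constructor. auto.
Qed.

Lemma ins_sorted x s : ~ In x s -> StronglySorted Rlt s -> StronglySorted Rlt (ins x s).
Proof.
  induction s as [|y s IH]; simpl; intros Hn HS.
  - repeat constructor.
  - inversion HS; subst. destruct (Rlt_dec x y).
    + constructor; auto. constructor; auto. eapply Forall_impl; [|eauto]. simpl; intros; lra.
    + assert (y < x) by (assert (x <> y) by (intro; subst; auto); lra).
      constructor; auto. eapply Permutation_Forall. apply ins_perm. constructor; auto.
Qed.

Lemma sort_exists l : NoDup l -> exists s, Permutation l s /\ StronglySorted Rlt s.
Proof.
  induction 1 as [|x l Hx ND IH].
  - exists nil; split; constructor.
  - destruct IH as [s [Hp Hs]]. exists (ins x s). split.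
    + eapply perm_trans; [|apply ins_perm]. constructor; auto.
    + apply ins_sorted; auto. intro; apply Hx. apply Permutation_in with s; auto. symmetry; auto.
Qed.

Fixpoint natsum (g : nat -> nat) (n : nat) : nat :=
  match n with O => O | S n => (g O + natsum (fun i => g (S i)) n)%nat end.
Definition Gn n := natsum (fun i => Nat.min i (pred n - i)) n.

Lemma Perm_filter (f : R -> bool) l l' : Permutation l l' -> Permutation (filter f l) (filter f l').
Proof.
  induction 1; simpl; auto.
  - destruct (f x); auto.
  - destruct (f x), (f y); auto. apply perm_swap.
  - eapply perm_trans; eauto.
Qed.

Lemma lo_perm V s b : Permutation V s -> lo V b = lo s b.
Proof. intros; unfold lo. apply Permutation_length, Perm_filter; auto. Qed.
Lemma hi_perm V s b : Permutation V s -> hi V b = hi s b.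
Proof. intros; unfold hi. apply Permutation_length, Perm_filter; auto. Qed.

Lemma lo_sorted_sum s : StronglySorted Rlt s -> forall g, sumf (fun b => g (lo s b)) s = natsum g (length s).
Proof.
  induction 1 as [|x s HS IH HF]; intros g; simpl; auto.
  assert (E0 : lo (x :: s) x = O).
  { unfold lo. simpl. rewrite (ltb_f x x) by lra.
    clear -HF. induction s; simpl; auto. inversion HF; subst. rewrite (ltb_f a x) by lra. auto. }
  rewrite E0. f_equal. rewrite <- (IH (fun i => g (S i))).
  apply sumf_ext_in. intros y Hy. f_equal. unfold lo. simpl.
  rewrite Forall_forall in HF. rewrite (ltb_t x y); auto.
Qed.

Lemma sumf_le f g l : (forall x, In x l -> (f x <= g x)%nat) -> (sumf f l <= sumf g l)%nat.
Proof.
  induction l; simpl; intros; auto. assert (f a <= g a)%nat by auto.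
  assert (sumf f l <= sumf g l)%nat by auto. lia.
Qed.

Lemma min_sum V : NoDup V -> sumf (fun b => Nat.min (lo V b) (hi V b)) V = Gn (length V).
Proof.
  intros ND. destruct (sort_exists V ND) as [s [Hp Hs]].
  rewrite (sumf_perm _ _ _ Hp).
  rewrite (sumf_ext_in _ (fun b => Nat.min (lo s b) (pred (length V) - lo s b)%nat)).
  - unfold Gn. rewrite (Permutation_length Hp). apply (lo_sorted_sum s Hs (fun i => Nat.min i (pred (length s) - i))).
  - intros b Hb. rewrite <- (lo_perm V s b Hp). f_equal.
    assert (In b V) by (apply Permutation_in with s; auto; symmetry; auto).
    pose proof (lohi_in V b ND H). lia.
Qed.

Definition RP (V : list R) := forall b, In b V ->
  (forall a, In a V -> a < b -> In (2*b-a) V) \/ (forall a, In a V -> b < a -> In (2*b-a) V).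

Lemma cnt_le_min V b : NoDup V -> (cnt V b <= Nat.min (lo V b) (hi V b))%nat.
Proof.
  intros. pose proof (cnt_le_lo V b). pose proof (cnt_le_cnt' V b H). pose proof (cnt'_le_hi V b). lia.
Qed.

Lemma S3_le V : NoDup V -> (S3 V <= Gn (length V))%nat.
Proof.
  intros. rewrite S3_cnt, <- min_sum; auto. apply sumf_le. intros; apply cnt_le_min; auto.
Qed.

Lemma RP_S3 V : NoDup V -> RP V -> S3 V = Gn (length V).
Proof.
  intros ND HR. apply Nat.le_antisymm. apply S3_le; auto.
  rewrite S3_cnt, <- min_sum; auto. apply sumf_le. intros b Hb.
  destruct (HR b Hb) as [L|U].
  - assert (cnt V b = lo V b).
    { unfold cnt, lo. f_equal. apply filter_ext_in. intros a Ha.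
      destruct (ltb a b) eqn:E; simpl; auto. apply inR_true. apply L; auto. apply ltb_true; auto. }
    lia.
  - assert (cnt' V b = hi V b).
    { unfold cnt', hi. f_equal. apply filter_ext_in. intros a Ha.
      destruct (ltb b a) eqn:E; simpl; auto. apply inR_true. apply U; auto. apply ltb_true; auto. }
    pose proof (cnt'_le_cnt V b ND). lia.
Qed.

Lemma S3_RP V : NoDup V -> S3 V = Gn (length V) -> RP V.
Proof.
  intros ND E. rewrite S3_cnt, <- min_sum in E; auto.
  pose proof (sumf_le_eq _ _ _ (fun b _ => cnt_le_min V b ND) E) as H.
  intros b Hb. specialize (H b Hb). cbv beta in H.
  destruct (Nat.le_ge_cases (lo V b) (hi V b)).
  - left. intros a Ha Hab.
    apply inR_true. apply (filter_eq_all (fun a => ltb a b) (fun a => inR (2*b-a) V) V); auto.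
    + change (cnt V b = lo V b). lia.
    + apply ltb_true; auto.
  - right. intros a Ha Hab.
    apply inR_true. apply (filter_eq_all (fun a => ltb b a) (fun a => inR (2*b-a) V) V); auto.
    + change (cnt' V b = hi V b).
      pose proof (cnt_le_cnt' V b ND). pose proof (cnt'_le_cnt V b ND). pose proof (cnt'_le_hi V b). lia.
    + apply ltb_true; auto.
Qed.

Lemma NoDup_map_gen {A B : Type} (h : A -> B) l : (forall x y, h x = h y -> x = y) -> NoDup l -> NoDup (map h l).
Proof.
  intros Hi. induction 1; simpl; constructor; auto.
  intro Hin. apply in_map_iff in Hin. destruct Hin as [y [Hy Hy']].
  apply Hi in Hy. subst; auto.
Qed.

Definition W0 n := map INR (seq 0 n).

Lemma W0_props n : NoDup (W0 n) /\ length (W0 n) = n /\ RP (W0 n).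
Proof.
  unfold W0. split; [|split].
  - apply NoDup_map_gen. apply INR_eq. apply seq_NoDup.
  - rewrite length_map, length_seq; auto.
  - intros b Hb. apply in_map_iff in Hb. destruct Hb as [k [<- Hk]]. apply in_seq in Hk.
    destruct (le_lt_dec (2*k) (pred n)).
    + left. intros a Ha Hab. apply in_map_iff in Ha. destruct Ha as [j [<- Hj]]. apply in_seq in Hj.
      apply INR_lt in Hab. apply in_map_iff. exists (2*k - j)%nat. split.
      * rewrite minus_INR by lia. rewrite mult_INR. simpl. ring.
      * apply in_seq. lia.
    + right. intros a Ha Hab. apply in_map_iff in Ha. destruct Ha as [j [<- Hj]]. apply in_seq in Hj.
      apply INR_lt in Hab. apply in_map_iff. exists (2*k - j)%nat. split.
      * rewrite minus_INR by lia. rewrite mult_INR. simpl. ring.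
      * apply in_seq. lia.
Qed.

Lemma optimal_RP V : NoDup V -> (optimal3 V <-> RP V).
Proof.
  intros ND. split.
  - intros Hopt. apply S3_RP; auto. apply Nat.le_antisymm. apply S3_le; auto.
    destruct (W0_props (length V)) as [A [B C]].
    pose proof (Hopt (W0 (length V)) A B). rewrite RP_S3 in H; auto. rewrite B in H. auto.
  - intros HR W NDW LW. rewrite (RP_S3 V); auto. rewrite <- LW. apply S3_le; auto.
Qed.

Open Scope Z_scope.
Definition InQ (c m c' m' z : Z) : Prop := (c <= z <= c+2*m /\ (z-c) mod 2 = 0) \/ (c' <= z <= c'+2*m' /\ (z-c') mod 2 = 0).
Definition RelZ c m c' m' := c+m = c'+m' \/ c+m = c'+m'+1 \/ c'+m' = c+m+1.
Definition GoodZ c m c' m' := c mod 2 = 0 /\ c' mod 2 = 1 /\ 0 <= m /\ 0 <= m' /\ RelZ c m c' m'.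

Lemma RPSZ c m c' m' z : GoodZ c m c' m' -> InQ c m c' m' z ->
  (z <= Z.min (c+m) (c'+m') -> forall w, InQ c m c' m' w -> w < z -> InQ c m c' m' (2*z-w)) /\
  (Z.min (c+m) (c'+m') < z -> forall w, InQ c m c' m' w -> z < w -> InQ c m c' m' (2*z-w)).
Proof.
  unfold GoodZ, RelZ, InQ. intros [H1 [H2 [H3 [H4 H5]]]] Hz.
  split; intros Ht w Hw Hwz; Z.div_mod_to_equations;
  repeat match goal with H: _ \/ _ |- _ => destruct H end; lia.
Qed.

Lemma factZ (P : Z -> Prop) U V x : U < x -> x < V ->
  ((P (2*x-U) \/ 2*x-U = U \/ 2*x-U = V) \/ (P (2*x-V) \/ 2*x-V = U \/ 2*x-V = V)) ->
  P (2*x-U) \/ P (2*x-V) \/ U+V = 2*x.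
Proof. intros. destruct H1 as [[?|[?|?]]|[?|[?|?]]]; (tauto || lia). Qed.

Lemma forms c m c' m' U V : c mod 2 = 0 -> c' mod 2 = 1 -> 0 <= m -> 0 <= m' -> RelZ c m c' m' ->
  U < c -> U < c' -> c+2*m < V -> c'+2*m' < V ->
  let t := Z.min (c+m) (c'+m') in
  let PZ z := InQ c m c' m' z \/ z = U \/ z = V in
  (PZ (2*t-U) \/ PZ(2*t-V)) -> (PZ (2*(t+1)-U) \/ PZ(2*(t+1)-V)) ->
  (U = c-2 /\ V = c+2*m+2 /\ RelZ (c-2) (m+2) c' m') \/ (U = c-2 /\ V = c'+2*m'+2 /\ RelZ (c-2) (m+1) c' (m'+1)) \/
  (U = c'-2 /\ V = c+2*m+2 /\ RelZ c (m+1) (c'-2) (m'+1)) \/ (U = c'-2 /\ V = c'+2*m'+2 /\ RelZ c m (c'-2) (m'+2)).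
Proof.
  intros Hc Hc' Hm Hm' Hr HU1 HU2 HV1 HV2 t PZ F1 F2. unfold PZ in *. subst t. unfold RelZ in Hr.
  apply factZ in F1; [|lia|lia].
  apply factZ in F2; [|lia|Z.div_mod_to_equations; lia].
  unfold RelZ in *.
  destruct Hr as [Hr|[Hr|Hr]];
  [replace (Z.min (c+m) (c'+m')) with (c+m) in * by lia|replace (Z.min (c+m) (c'+m')) with (c'+m') in * by lia|replace (Z.min (c+m) (c'+m')) with (c+m) in * by lia];
  (destruct F1 as [F1|[F1|F1]]; destruct F2 as [F2|[F2|F2]]); unfold InQ in *; Z.div_mod_to_equations;
  repeat match goal with H: _ \/ _ |- _ => destruct H end; lia.
Qed.

Lemma ext c m c' m' U V : GoodZ c m c' m' ->
  U < c -> U < c' -> c+2*m < V -> c'+2*m' < V ->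
  let t := Z.min (c+m) (c'+m') in
  let PZ z := InQ c m c' m' z \/ z = U \/ z = V in
  (PZ (2*t-U) \/ PZ(2*t-V)) -> (PZ (2*(t+1)-U) \/ PZ(2*(t+1)-V)) ->
  exists c2 m2 c2' m2', GoodZ c2 m2 c2' m2' /\ forall z, PZ z <-> InQ c2 m2 c2' m2' z.
Proof.
  intros [Hc [Hc' [Hm [Hm' Hr]]]] HU1 HU2 HV1 HV2 t PZ F1 F2.
  destruct (forms c m c' m' U V Hc Hc' Hm Hm' Hr HU1 HU2 HV1 HV2 F1 F2) as [[E1 [E2 E3]]|[[E1 [E2 E3]]|[[E1 [E2 E3]]|[E1 [E2 E3]]]]];
  subst U V; unfold PZ, GoodZ, InQ; clear t PZ F1 F2; unfold RelZ in *.
  - exists (c-2), (m+2), c', m'. split. Z.div_mod_to_equations; lia.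
    intros z; split; intros Hz; Z.div_mod_to_equations; repeat match goal with H: _ \/ _ |- _ => destruct H end; lia.
  - exists (c-2), (m+1), c', (m'+1). split. Z.div_mod_to_equations; lia.
    intros z; split; intros Hz; Z.div_mod_to_equations; repeat match goal with H: _ \/ _ |- _ => destruct H end; lia.
  - exists c, (m+1), (c'-2), (m'+1). split. Z.div_mod_to_equations; lia.
    intros z; split; intros Hz; Z.div_mod_to_equations; repeat match goal with H: _ \/ _ |- _ => destruct H end; lia.
  - exists c, m, (c'-2), (m'+2). split. Z.div_mod_to_equations; lia.
    intros z; split; intros Hz; Z.div_mod_to_equations; repeat match goal with H: _ \/ _ |- _ => destruct H end; lia.
Qed.

Close Scope Z_scope.
Open Scope R_scope.


Definition RPS (P : R -> Prop) := forall b, P b ->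
  (forall a, P a -> a < b -> P (2*b-a)) \/ (forall a, P a -> b < a -> P (2*b-a)).

Lemma RPS_ext (P P' : R -> Prop) : (forall x, P x <-> P' x) -> RPS P -> RPS P'.
Proof.
  intros E H b Hb. apply E in Hb. destruct (H b Hb) as [L|U]; [left|right]; intros a Ha Hab;
  apply E; [apply L|apply U]; auto; apply E; auto.
Qed.

Lemma RPS_sim (P : R -> Prop) al be : al <> 0 -> RPS P ->
  RPS (fun y => exists x, P x /\ y = al * x + be).
Proof.
  intros Hal H b [xb [Hxb ->]].
  destruct (Rlt_or_le 0 al) as [Hp|Hn].
  - destruct (H xb Hxb) as [L|U]; [left|right]; intros a [xa [Hxa ->]] Hab.
    + exists (2*xb - xa). split. apply L; auto. apply Rmult_lt_reg_l with al; lra. ring.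
    + exists (2*xb - xa). split. apply U; auto. apply Rmult_lt_reg_l with al; lra. ring.
  - assert (al < 0) by lra.
    destruct (H xb Hxb) as [L|U]; [right|left]; intros a [xa [Hxa ->]] Hab.
    + exists (2*xb - xa). split. apply L; auto. apply Rmult_lt_reg_l with (-al); lra. ring.
    + exists (2*xb - xa). split. apply U; auto. apply Rmult_lt_reg_l with (-al); lra. ring.
Qed.

Definition QR c m c' m' (y : R) := exists z, y = IZR z /\ InQ c m c' m' z.

Lemma RPS_QR c m c' m' : GoodZ c m c' m' -> RPS (QR c m c' m').
Proof.
  intros HG b [z [-> Hz]].
  destruct (RPSZ c m c' m' z HG Hz) as [L U].
  destruct (Z_le_gt_dec z (Z.min (c+m) (c'+m'))) as [Hle|Hgt].
  - left. intros a [w [-> Hw]] Hwz. apply lt_IZR in Hwz. exists (2*z-w)%Z. split.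
    rewrite minus_IZR, mult_IZR. simpl. ring. apply L; auto.
  - right. intros a [w [-> Hw]] Hwz. apply lt_IZR in Hwz. exists (2*z-w)%Z. split.
    rewrite minus_IZR, mult_IZR. simpl. ring. apply U; auto; lia.
Qed.

Lemma In_consec c m y : In y (consec_from c m) <->
  exists z, y = IZR z /\ (c <= z <= c + 2*Z.of_nat m)%Z /\ ((z-c) mod 2 = 0)%Z.
Proof.
  unfold consec_from. rewrite in_map_iff. split.
  - intros [j [<- Hj]]. apply in_seq in Hj. exists (c + 2*Z.of_nat j)%Z. split; auto.
    split. lia. replace (c + 2 * Z.of_nat j - c)%Z with (Z.of_nat j * 2)%Z by ring. apply Z_mod_mult.
  - intros [z [-> [Hz Hm]]]. exists (Z.to_nat ((z - c)/2)). split.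
    + f_equal. Z.div_mod_to_equations. lia.
    + apply in_seq. Z.div_mod_to_equations. lia.
Qed.

Lemma fold_plus_app l1 l2 : fold_right Rplus 0 (l1 ++ l2) = fold_right Rplus 0 l1 + fold_right Rplus 0 l2.
Proof. induction l1; simpl; try ring. rewrite IHl1; ring. Qed.

Lemma consec_len c m : length (consec_from c m) = S m.
Proof. unfold consec_from. rewrite length_map, length_seq. auto. Qed.

Lemma bary_consec c m : barycenter (consec_from c m) = IZR (c + Z.of_nat m).
Proof.
  unfold barycenter. rewrite consec_len.
  assert (fold_right Rplus 0 (consec_from c m) = INR (S m) * IZR (c + Z.of_nat m)).
  { unfold consec_from. induction m.
    - simpl. rewrite Z.add_0_r. ring.
    - rewrite seq_S, map_app, fold_plus_app, IHm. cbn [map fold_right]. rewrite Nat.add_0_l, Nat2Z.inj_succ, <- Z.add_1_r.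
      rewrite (S_INR (S m)), (S_INR m). rewrite !plus_IZR, !mult_IZR, <- INR_IZR_INZ. rewrite ?plus_IZR, <- ?INR_IZR_INZ. ring. }
  rewrite H. field. apply not_0_INR. lia.
Qed.

Lemma consec_NoDup c m : NoDup (consec_from c m).
Proof.
  unfold consec_from. apply NoDup_map_gen. intros x y H. apply eq_IZR in H. lia. apply seq_NoDup.
Qed.


Lemma SS_app l1 l2 : StronglySorted Rlt (l1 ++ l2) ->
  StronglySorted Rlt l1 /\ StronglySorted Rlt l2 /\ forall x y, In x l1 -> In y l2 -> x < y.
Proof.
  induction l1; simpl; intros H.
  - split; [constructor|split; auto]. intros; contradiction.
  - inversion H; subst. destruct (IHl1 H2) as [A [B C]]. split; [|split]; auto.
    + constructor; auto. rewrite Forall_forall in *. intros; apply H3; apply in_or_app; auto.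
    + intros x y [<-|Hx] Hy; auto. rewrite Forall_forall in H3. apply H3, in_or_app; auto.
Qed.

Lemma QR_IZR c m c' m' k : QR c m c' m' (IZR k) <-> InQ c m c' m' k.
Proof.
  split. intros [z [E H]]. apply eq_IZR in E. subst; auto. intros; exists k; auto.
Qed.

Lemma InQ_bounds c m c' m' z : GoodZ c m c' m' -> InQ c m c' m' z ->
  (Z.min c c' <= z <= Z.max (c+2*m) (c'+2*m'))%Z.
Proof. unfold GoodZ, InQ. intros. lia. Qed.

Lemma mem_list (ys : list R) (zs : list Z) c m c' m' :
  ys = map IZR zs -> (forall z, InQ c m c' m' z <-> In z zs) ->
  forall y, In y ys <-> QR c m c' m' y.
Proof.
  intros -> H y. rewrite in_map_iff. split.
  - intros [z [<- Hz]]. exists z. split; auto. apply H; auto.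
  - intros [z [-> Hz]]. exists z. split; auto. apply H; auto.
Qed.

Definition CoreP (s : list R) := exists al be c m c' m', 0 < al /\ GoodZ c m c' m' /\
  forall y, In y (map (fun x => al*x+be) s) <-> QR c m c' m' y.

Lemma core2 x0 x1 : x0 < x1 -> CoreP [x0; x1].
Proof.
  intros H. exists (1/(x1-x0)), (-x0/(x1-x0)), 0%Z, 0%Z, 1%Z, 0%Z. split; [|split].
  - apply Rdiv_lt_0_compat; lra.
  - unfold GoodZ, RelZ. split; [reflexivity|]. split; [reflexivity|]. lia.
  - apply mem_list with [0%Z; 1%Z].
    + simpl. f_equal; [|f_equal]; field; lra.
    + intros z. unfold InQ. simpl. Z.div_mod_to_equations. lia.
Qed.

Lemma core3 x0 x1 x2 : StronglySorted Rlt [x0; x1; x2] -> RP [x0; x1; x2] -> CoreP [x0; x1; x2].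
Proof.
  intros HS HR.
  apply StronglySorted_inv in HS as [HS1 HF1]. apply StronglySorted_inv in HS1 as [_ HF2].
  rewrite Forall_forall in HF1, HF2.
  assert (x0 < x1) by (apply HF1; simpl; auto).
  assert (x1 < x2) by (apply HF2; simpl; auto).
  assert (E : x2 = 2*x1 - x0).
  { destruct (HR x1) as [L|U]; simpl; auto.
    - specialize (L x0). simpl in L. destruct L as [A|[A|[A|A]]]; auto; lra.
    - specialize (U x2). simpl in U. destruct U as [A|[A|[A|A]]]; auto; lra. }
  exists (1/(x1-x0)), (-x0/(x1-x0)), 0%Z, 1%Z, 1%Z, 0%Z. split; [|split].
  - apply Rdiv_lt_0_compat; lra.
  - unfold GoodZ, RelZ. split; [reflexivity|]. split; [reflexivity|]. lia.
  - apply mem_list with [0%Z; 1%Z; 2%Z].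
    + simpl. subst x2. f_equal; [|f_equal; [|f_equal]]; field; lra.
    + intros z. unfold InQ. simpl. Z.div_mod_to_equations. lia.
Qed.

Lemma core_step x0 mid xl : StronglySorted Rlt (x0 :: mid ++ [xl]) -> RP (x0 :: mid ++ [xl]) ->
  (2 <= length mid)%nat -> (StronglySorted Rlt mid -> RP mid -> CoreP mid) -> CoreP (x0 :: mid ++ [xl]).
Proof.
  intros HS HR Hlen IH.
  set (s := x0 :: mid ++ [xl]) in *.
  apply StronglySorted_inv in HS as [HS1 HF1]. rewrite Forall_forall in HF1.
  destruct (SS_app _ _ HS1) as [HSm [_ Hml]].
  assert (Hs : forall y, In y s <-> y = x0 \/ In y mid \/ y = xl).
  { intros y. unfold s. simpl. rewrite in_app_iff. simpl. intuition. }
  assert (Hlt0 : forall y, In y mid -> x0 < y) by (intros; apply HF1; apply in_app_iff; auto).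
  assert (Hltl : forall y, In y mid -> y < xl) by (intros; apply Hml; simpl; auto).
  assert (Hbnd : forall y, In y s -> x0 <= y <= xl).
  { intros y Hy. apply Hs in Hy. destruct Hy as [->|[Hy| ->]].
    - destruct mid as [|z mid']; [simpl in Hlen; lia|]. assert (x0 < z) by (apply Hlt0; simpl; auto).
      assert (z < xl) by (apply Hltl; simpl; auto). lra.
    - specialize (Hlt0 y Hy); specialize (Hltl y Hy); lra.
    - destruct mid as [|z mid']; [simpl in Hlen; lia|]. assert (x0 < z) by (apply Hlt0; simpl; auto).
      assert (z < xl) by (apply Hltl; simpl; auto). lra. }
  assert (HRm : RP mid).
  { intros b Hb. assert (Hbs : In b s) by (apply Hs; auto).
    specialize (Hlt0 b Hb) as Hb0. specialize (Hltl b Hb) as Hbl.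
    destruct (HR b Hbs) as [L|U]; [left|right]; intros a Ha Hab.
    - assert (Has : In a s) by (apply Hs; auto). pose proof (Hlt0 a Ha).
      assert (A1 : In (2*b-a) s) by auto.
      assert (A2 : In (2*b-x0) s) by (apply L; [apply Hs; auto|lra]).
      apply Hbnd in A2. apply Hs in A1. destruct A1 as [A1|[A1|A1]]; auto; lra.
    - assert (Has : In a s) by (apply Hs; auto). pose proof (Hltl a Ha).
      assert (A1 : In (2*b-a) s) by auto.
      assert (A2 : In (2*b-xl) s) by (apply U; [apply Hs; auto|lra]).
      apply Hbnd in A2. apply Hs in A1. destruct A1 as [A1|[A1|A1]]; auto; lra. }
  destruct (IH HSm HRm) as [al [be [c [m [c' [m' [Hal [HG HQ]]]]]]]].
  set (f := fun x => al*x+be) in *.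
  set (U := f x0). set (Vv := f xl).
  assert (HT : forall y, In y (map f s) <-> y = U \/ QR c m c' m' y \/ y = Vv).
  { intros y. rewrite <- HQ. unfold s. simpl. rewrite map_app, in_app_iff. simpl. unfold U, Vv. intuition. }
  assert (HRT : RPS (fun y => In y (map f s))).
  { apply RPS_ext with (fun y => exists x, In x s /\ y = al*x+be).
    - intros y. rewrite in_map_iff. split; intros [x [A B]]; exists x; split; auto.
    - apply RPS_sim. lra. exact HR. }
  assert (HQb : forall z, InQ c m c' m' z -> U < IZR z < Vv).
  { intros z Hz. assert (In (IZR z) (map f mid)). { apply HQ. exists z; auto. }
    apply in_map_iff in H. destruct H as [x [Ex Hx]]. rewrite <- Ex. unfold U, Vv, f.
    specialize (Hlt0 x Hx). specialize (Hltl x Hx). split; apply Rplus_lt_compat_r, Rmult_lt_compat_l; auto. }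
  set (mu := Z.min c c'). set (MM := Z.max (c+2*m) (c'+2*m')).
  assert (Hmu : InQ c m c' m' mu) by (unfold mu, InQ; destruct HG as [? [? [? [? ?]]]]; Z.div_mod_to_equations; lia).
  assert (HMM : InQ c m c' m' MM) by (unfold MM, InQ; destruct HG as [? [? [? [? ?]]]]; Z.div_mod_to_equations; lia).
  assert (HmuM : (mu < MM)%Z) by (unfold mu, MM; destruct HG as [? [? [? [? ?]]]]; Z.div_mod_to_equations; lia).
  assert (Tlow : forall y, In y (map f s) -> y < IZR mu -> y = U).
  { intros y Hy Hlt. apply HT in Hy. destruct Hy as [Hy|[[z [-> Hz]]|Hy]]; auto.
    - apply InQ_bounds in Hz; auto. apply lt_IZR in Hlt. unfold mu in *. lia.
    - pose proof (HQb _ HMM). apply IZR_lt in HmuM. lra. }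
  assert (Thigh : forall y, In y (map f s) -> IZR MM < y -> y = Vv).
  { intros y Hy Hlt. apply HT in Hy. destruct Hy as [Hy|[[z [-> Hz]]|Hy]]; auto.
    - pose proof (HQb _ Hmu). apply IZR_lt in HmuM. lra.
    - apply InQ_bounds in Hz; auto. apply lt_IZR in Hlt. unfold MM in *. lia. }
  pose proof (HQb _ Hmu) as [Umu _]. pose proof (HQb _ HMM) as [_ VMM].
  assert (HmuR := HmuM). apply IZR_lt in HmuR.
  assert (TU : In U (map f s)) by (apply HT; auto).
  assert (TV : In Vv (map f s)) by (apply HT; auto).
  assert (TMM : In (IZR MM) (map f s)) by (apply HT; right; left; exists MM; auto).
  assert (Tmu : In (IZR mu) (map f s)) by (apply HT; right; left; exists mu; auto).
  assert (H1 : In (2*IZR mu - U) (map f s)).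
  { destruct (HRT _ Tmu) as [L|Up]. apply L; auto.
    exfalso. pose proof (Up _ TV ltac:(lra)) as A. pose proof (Up _ TMM HmuR) as B.
    apply Tlow in A; [|lra]. apply Tlow in B; [|lra]. lra. }
  assert (H2 : In (2*IZR MM - Vv) (map f s)).
  { destruct (HRT _ TMM) as [L|Up]; [|apply Up; auto].
    exfalso. pose proof (L _ TU ltac:(lra)) as A. pose proof (L _ Tmu HmuR) as B.
    apply Thigh in A; [|lra]. apply Thigh in B; [|lra]. lra. }
  assert (Hint : exists Uz Vz, U = IZR Uz /\ Vv = IZR Vz).
  { apply HT in H1. apply HT in H2.
    destruct H1 as [H1|[[z1 [E1 _]]|H1]]; [lra| |];
    destruct H2 as [H2|[[z2 [E2 _]]|H2]]; try lra.
    - exists (2*mu - z1)%Z, (2*MM - (2*mu - z1))%Z. rewrite !minus_IZR, !mult_IZR. split; simpl; lra.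
    - exists (2*mu - z1)%Z, (2*MM - z2)%Z. rewrite !minus_IZR, !mult_IZR. split; simpl; lra.
    - exists (2*mu - (2*MM - z2))%Z, (2*MM - z2)%Z. rewrite !minus_IZR, !mult_IZR. split; simpl; lra. }
  destruct Hint as [Uz [Vz [EU EV]]].
  assert (TZ : forall k, In (IZR k) (map f s) <-> InQ c m c' m' k \/ k = Uz \/ k = Vz).
  { intros k. rewrite HT, QR_IZR, EU, EV. split; intros [A|[A|A]]; try (apply eq_IZR in A);
    try (rewrite A); auto. }
  assert (HUz : (Uz < mu)%Z) by (apply lt_IZR; lra).
  assert (HVz : (MM < Vz)%Z) by (apply lt_IZR; lra).
  set (t := Z.min (c+m) (c'+m')).
  assert (Ht : InQ c m c' m' t) by (unfold t, InQ; destruct HG as [? [? [? [? ?]]]]; unfold RelZ in *; Z.div_mod_to_equations; lia).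
  assert (Ht1 : InQ c m c' m' (t+1)) by (unfold t, InQ; destruct HG as [? [? [? [? ?]]]]; unfold RelZ in *; Z.div_mod_to_equations; lia).
  assert (Fact : forall x, InQ c m c' m' x ->
     (InQ c m c' m' (2*x-Uz) \/ (2*x-Uz = Uz)%Z \/ (2*x-Uz = Vz)%Z) \/
     (InQ c m c' m' (2*x-Vz) \/ (2*x-Vz = Uz)%Z \/ (2*x-Vz = Vz)%Z)).
  { intros x Hx. assert (Tx : In (IZR x) (map f s)) by (apply TZ; auto).
    pose proof (InQ_bounds _ _ _ _ _ HG Hx).
    destruct (HRT _ Tx) as [L|Up]; [left|right]; apply TZ.
    - replace (IZR (2*x-Uz)) with (2*IZR x - U) by (rewrite EU, minus_IZR, mult_IZR; simpl; ring).
      apply L; auto. rewrite EU. apply IZR_lt. unfold mu in *; lia.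
    - replace (IZR (2*x-Vz)) with (2*IZR x - Vv) by (rewrite EV, minus_IZR, mult_IZR; simpl; ring).
      apply Up; auto. rewrite EV. apply IZR_lt. unfold MM in *; lia. }
  destruct HG as [Hc [Hc' [Hm [Hm' Hr]]]] eqn:HG'.
  destruct (ext c m c' m' Uz Vz HG) as [c2 [m2 [c2' [m2' [HG2 HE]]]]].
  - unfold mu in *; lia.
  - unfold mu in *; lia.
  - unfold MM in *; lia.
  - unfold MM in *; lia.
  - apply (Fact t Ht).
  - apply (Fact (t+1)%Z Ht1).
  - exists al, be, c2, m2, c2', m2'. split; auto. split; auto.
    intros y. fold f. rewrite HT. split.
    + intros [A|[[z [-> Hz]]|A]].
      * exists Uz. split. rewrite A; auto. apply HE; auto.
      * exists z. split; auto. apply HE; auto.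
      * exists Vz. split. rewrite A; auto. apply HE; auto.
    + intros [z [-> Hz]]. apply HE in Hz. destruct Hz as [Hz|[Hz|Hz]].
      * right; left; exists z; auto.
      * left; rewrite EU, Hz; auto.
      * right; right; rewrite EV, Hz; auto.
Qed.

Lemma core n : forall s, length s = n -> (2 <= n)%nat -> StronglySorted Rlt s -> RP s -> CoreP s.
Proof.
  induction n as [n IH] using lt_wf_ind. intros s Hl H2 HS HR.
  destruct s as [|x0 [|x1 [|x2 rest]]]; simpl in Hl; try lia.
  - apply core2. apply StronglySorted_inv in HS as [_ HF]. inversion HF; auto.
  - destruct rest as [|x3 rest].
    + apply core3; auto.
    + destruct (exists_last (l := x1 :: x2 :: x3 :: rest) ltac:(discriminate)) as [mid [xl Emid]].
      rewrite Emid in *.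
      assert (Lm : length (x1 :: x2 :: x3 :: rest) = S (length mid)).
      { rewrite Emid, length_app. simpl. lia. }
      simpl in Lm, Hl.
      apply core_step; auto. simpl. lia.
      intros. apply (IH (length mid)); [lia|reflexivity|lia|auto|auto].
Qed.


Lemma QR_EO c m c' m' y : (0 <= m)%Z -> (0 <= m')%Z ->
  QR c m c' m' y <-> In y (consec_from c (Z.to_nat m)) \/ In y (consec_from c' (Z.to_nat m')).
Proof.
  intros Hm Hm'. rewrite !In_consec, !Z2Nat.id by auto. unfold QR, InQ. split.
  - intros [z [-> [H|H]]]; [left|right]; exists z; tauto.
  - intros [[z [-> H]]|[z [-> H]]]; exists z; tauto.
Qed.

Lemma nearly_iff a b : Rabs (IZR a - IZR b) = 1 <-> (a - b = 1 \/ b - a = 1)%Z.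
Proof.
  rewrite <- minus_IZR, <- abs_IZR. split.
  - intros H. apply eq_IZR in H. lia.
  - intros H. replace (Z.abs (a - b)) with 1%Z by lia. reflexivity.
Qed.

Theorem mainTheorem7 (n : nat) (V : list R) :
  (3 <= n)%nat -> NoDup V -> length V = n ->
  (optimal3 V <->
   exists (f : R -> R) (E O : list R),
     similarity f /\ consec_even E /\ consec_odd O /\
     (forall y, In y (map f V) <-> In y E \/ In y O) /\
     (if Nat.odd n then concentric E O else nearly_concentric E O)).
Proof.
  intros Hn ND Hl. rewrite optimal_RP by auto. split.
  - intros HR. destruct (sort_exists V ND) as [s [Hp HS]].
    assert (HRs : RP s).
    { intros b Hb. assert (Hm : forall x, In x V <-> In x s) by (intros; split; apply Permutation_in; auto; symmetry; auto).
      apply Hm in Hb. destruct (HR b Hb) as [L|U]; [left|right]; intros a Ha Hab; apply Hm; [apply L|apply U]; auto; apply Hm; auto. }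
    destruct (core (length s) s eq_refl ltac:(rewrite <- (Permutation_length Hp); lia) HS HRs)
      as [al [be [c [m [c' [m' [Hal [HG HQ]]]]]]]].
    pose proof HG as [Hc [Hc' [Hm [Hm' Hr]]]].
    exists (fun x => al*x+be), (consec_from c (Z.to_nat m)), (consec_from c' (Z.to_nat m')).
    assert (HM : forall y, In y (map (fun x => al*x+be) V) <-> In y (consec_from c (Z.to_nat m)) \/ In y (consec_from c' (Z.to_nat m'))).
    { intros y. rewrite <- QR_EO by auto. rewrite <- HQ. split; apply Permutation_in; [|symmetry]; apply Permutation_map; auto. }
    split; [|split; [|split; [|split]]].
    + exists al, be. split; auto. lra.
    + exists c, (Z.to_nat m). split; auto. exists (c/2)%Z. Z.div_mod_to_equations. lia.
    + exists c', (Z.to_nat m'). split; auto. exists (c'/2)%Z. Z.div_mod_to_equations. lia.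
    + exact HM.
    + assert (Hlen : n = (S (Z.to_nat m) + S (Z.to_nat m'))%nat).
      { rewrite <- Hl, <- (length_map (fun x => al*x+be) V), <- (consec_len c (Z.to_nat m)), <- (consec_len c' (Z.to_nat m')), <- length_app.
        apply Nat.le_antisymm; apply NoDup_incl_length.
        - apply NoDup_map_inj; auto. intros x y E. apply Rmult_eq_reg_l with al; lra.
        - intros y Hy. apply in_app_iff, HM; auto.
        - apply NoDup_app; try apply consec_NoDup. intros a Ha Hb.
          apply In_consec in Ha. apply In_consec in Hb. destruct Ha as [z [-> [A B]]]. destruct Hb as [w [E [C D]]].
          apply eq_IZR in E. subst. Z.div_mod_to_equations. lia.
        - intros y Hy. apply HM, in_app_iff; auto. }
      unfold concentric, nearly_concentric. rewrite !bary_consec, !Z2Nat.id by auto.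
      destruct (Nat.odd n) eqn:Eo; [|rewrite nearly_iff].
      * apply Nat.odd_spec in Eo. destruct Eo as [k Hk]. unfold RelZ in Hr.
        f_equal. Z.div_mod_to_equations. lia.
      * assert (Nat.even n = true) by (rewrite <- Nat.negb_odd, Eo; auto).
        apply Nat.even_spec in H. destruct H as [k Hk]. unfold RelZ in Hr.
        Z.div_mod_to_equations. lia.
  - intros [f [E [O [[al [be [Hal Hf]]] [[c [me [Hc ->]]] [[c' [mo [Hc' ->]]] [HM Hcond]]]]]]].
    assert (HG : GoodZ c (Z.of_nat me) c' (Z.of_nat mo)).
    { unfold GoodZ, RelZ. destruct Hc as [k Hk]. destruct Hc' as [k' Hk'].
      unfold concentric, nearly_concentric in Hcond. rewrite !bary_consec in Hcond.
      destruct (Nat.odd n).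
      - apply eq_IZR in Hcond. split; [|split]; Z.div_mod_to_equations; lia.
      - apply nearly_iff in Hcond. split; [|split]; Z.div_mod_to_equations; lia. }
    assert (H1 : RPS (fun y => In y (map f V))).
    { apply RPS_ext with (QR c (Z.of_nat me) c' (Z.of_nat mo)).
      - intros y. rewrite HM, QR_EO by lia. rewrite !Nat2Z.id. tauto.
      - apply RPS_QR; auto. }
    apply RPS_sim with (al := 1/al) (be := -be/al) in H1;
      [|unfold Rdiv; rewrite Rmult_1_l; apply Rinv_neq_0_compat; auto].
    intros b Hb.
    apply (RPS_ext _ (fun x => In x V)) in H1.
    + apply H1; auto.
    + intros x. split.
      * intros [y [Hy ->]]. apply in_map_iff in Hy. destruct Hy as [x' [<- Hx']].
        rewrite Hf. replace (1 / al * (al * x' + be) + - be / al) with x' by (field; auto). auto.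
      * intros Hx. exists (f x). split. apply in_map; auto. rewrite Hf. field; auto.
Qed.
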